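(* Let $G$ be a DCG that contains $k$ pairwise vertex-disjoint cycles, each of length at least $3$. Then $|\mathrm{MEC}(G)|\ge 2^k$.
   Context: A DCG is a directed graph without self-loops (cycles allowed). A cycle of length $\ell$ is a sequence of distinct vertices $(v_1,\dots,v_\ell)$ with edges $v_i\to v_{i+1}$ for $i<\ell$ and $v_\ell\to v_1$. Markov equivalence: a path between $a\ne b$ is a sequence of vertices (repeats allowed) with a specified directed edge (either direction) between consecutive vertices; an internal vertex is a collider if both adjacent path-edges point into it; the path is active given $Z$ if every internal non-collider is outside $Z$ and every collider is in $Z$ or has a descendant (itself or a vertex reachable by a directed path) in $Z$; $a,b$ are d-separated given $Z$ if no active path exists; two graphs are Markov equivalent if they have the same d-separations. $\mathrm{MEC}(G)$ is the set of DCGs on the same vertex set Markov equivalent to $G$. *)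

(* Defs.v *)
From mathcomp Require Import all_boot.
From mathcomp Require Import boolp.

Set Implicit Arguments.
Unset Strict Implicit.
Unset Printing Implicit Defensive.

(* A directed graph on the finite vertex type T is given by its edge set
   E : {set T * T}; (x, y) \in E means the edge x -> y. *)
Definition is_DCG (T : finType) (E : {set T * T}) : Prop :=
  forall x : T, (x, x) \notin E.

Definition edge_rel (T : finType) (E : {set T * T}) : rel T :=
  fun x y => (x, y) \in E.

Definition is_cycle (T : finType) (E : {set T * T}) (c : seq T) : Prop :=
  c != [::] /\ uniq c /\ cycle (edge_rel E) c.

(* A path starting at vertex a is encoded by the list of its steps:
   (v, d) means the next vertex is v, reached through the edge
   prev -> v if d = true, or through the edge v -> prev if d = false.
   Vertices may repeat. *)
Fixpoint walk_ok (T : finType) (E : {set T * T}) (u : T) (s : seq (T * bool))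
  : bool :=
  match s with
  | [::] => true
  | (v, d) :: s' => (if d then (u, v) \in E else (v, u) \in E) && walk_ok E v s'
  end.

(* Internal vertices of the path are the vertices of all steps but the last.
   An internal vertex v (entered by a step with direction din, left by a step
   with direction dout) is a collider iff din = true (prev -> v) and
   dout = false (next -> v). *)
Fixpoint active_internal (T : finType) (E : {set T * T}) (Z : {set T})
  (s : seq (T * bool)) : bool :=
  match s with
  | (v, din) :: ((_, dout) :: _) as s' =>
      (if din && ~~ dout
       then [exists w in Z, connect (edge_rel E) v w]
       else v \notin Z)
      && active_internal E Z s'
  | _ => true
  end.

Definition active_path (T : finType) (E : {set T * T}) (Z : {set T})
  (a b : T) (s : seq (T * bool)) : bool :=
  [&& walk_ok E a s, last a (map fst s) == b & active_internal E Z s].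

Definition d_separated (T : finType) (E : {set T * T}) (a b : T) (Z : {set T})
  : Prop :=
  ~ exists s : seq (T * bool), active_path E Z a b s.

Definition markov_equivalent (T : finType) (E1 E2 : {set T * T}) : Prop :=
  forall (a b : T) (Z : {set T}), a != b ->
    (d_separated E1 a b Z <-> d_separated E2 a b Z).

Definition MEC (T : finType) (E : {set T * T}) : {set {set T * T}} :=
  [set E' : {set T * T} | `[< is_DCG E' /\ markov_equivalent E E' >]].

(* Main.v *)
Require Import Defs.
From mathcomp Require Import all_boot.
From mathcomp Require Import boolp.
Set Implicit Arguments.
Unset Strict Implicit.
Unset Printing Implicit Defensive.


Section Walks.
Variables (T : finType) (E : {set T * T}) (Z : {set T}) (a : T).

Definition step (u v : T) (d : bool) : bool :=
  if d then (u, v) \in E else (v, u) \in E.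

Definition AZ (v : T) : bool := [exists w in Z, connect (edge_rel E) v w].

Definition cnd (u : T) (h d : bool) : bool :=
  if h && ~~ d then AZ u else u \notin Z.

Inductive Reach : T -> bool -> Prop :=
| R0 v d : step a v d -> Reach v d
| RS u h v d : Reach u h -> step u v d -> cnd u h d -> Reach v d.

Lemma RSc u h v : Reach u h -> (u, v) \in E -> cnd u h true -> Reach v true.
Proof. by move=> R st cd; apply: RS R _ cd. Qed.
Lemma RSp u h v : Reach u h -> (v, u) \in E -> cnd u h false -> Reach v false.
Proof. by move=> R st cd; apply: RS R _ cd. Qed.
Lemma R0c v : (a, v) \in E -> Reach v true.
Proof. by move=> st; apply: R0. Qed.
Lemma R0p v : (v, a) \in E -> Reach v false.
Proof. by move=> st; apply: R0. Qed.

Lemma walk_ok_rcons u s v d :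
  walk_ok E u (rcons s (v, d)) = walk_ok E u s && step (last u (map fst s)) v d.
Proof.
elim: s u => [|[w e] s IH] u /=; first by rewrite andbT.
by rewrite IH andbA.
Qed.

Lemma active_cons z t : active_internal E Z (z :: t) =
  (if t is w :: _ then cnd z.1 z.2 w.2 else true) && active_internal E Z t.
Proof. by case: z => v d; case: t => // [[w e] t]. Qed.

Lemma active_rcons2 s y x : active_internal E Z (rcons (rcons s y) x) =
  active_internal E Z (rcons s y) && cnd y.1 y.2 x.2.
Proof.
elim: s => [|z s IH]; first by case: y => v d; case: x => w e /=; rewrite andbT.
have -> : rcons (rcons (z :: s) y) x = z :: rcons (rcons s y) x by [].
have -> : rcons (z :: s) y = z :: rcons s y by [].
rewrite !active_cons IH andbA.
by case: s {IH} => //= [|w s]; rewrite ?andbT.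
Qed.

Lemma reach_path v d : Reach v d -> exists s,
  [&& walk_ok E a (rcons s (v, d)), last a (map fst (rcons s (v, d))) == v
    & active_internal E Z (rcons s (v, d))].
Proof.
elim=> [w e st|u h w e _ [s /and3P[Hw Hl Ha]] st cd].
  by exists [::]; rewrite /= eqxx !andbT; exact: st.
exists (rcons s (u, h)); rewrite walk_ok_rcons Hw /=.
rewrite map_rcons last_rcons in Hl; move/eqP: Hl => Hl.
rewrite map_rcons last_rcons Hl st map_rcons last_rcons eqxx /=.
by rewrite active_rcons2 Ha cd.
Qed.

Lemma path_reach s x : walk_ok E a (rcons s x) ->
  active_internal E Z (rcons s x) -> Reach x.1 x.2.
Proof.
elim/last_ind: s x => [|s y IH] [w e].
  by rewrite /= andbT => st _; apply: R0.
rewrite walk_ok_rcons active_rcons2 => /andP[Hw st] /andP[Ha cd].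
rewrite map_rcons last_rcons in st.
move: (IH y Hw Ha); case: y {Hw Ha IH} st cd => u h st cd Hr.
exact: RS Hr st cd.
Qed.

Lemma dconn_reach b : a != b ->
  (exists s, active_path E Z a b s) <-> exists d, Reach b d.
Proof.
move=> nab; split.
  move=> [s]; case/lastP: s => [|s x] /and3P[Hw Hl Ha].
    by move/eqP: Hl => /= abs; rewrite abs eqxx in nab.
  rewrite map_rcons last_rcons in Hl.
  exists x.2; move/eqP: Hl => <-; exact: path_reach Hw Ha.
move=> [d /reach_path [s /and3P[Hw Hl Ha]]].
by exists (rcons s (b, d)); rewrite /active_path Hw Hl Ha.
Qed.

End Walks.


Section Moral.
Variables (T : finType) (E : {set T * T}) (Z : {set T}) (a : T).

Definition ancS (P : T -> Prop) v := exists w, P w /\ connect (edge_rel E) v w.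

Definition madj (S : T -> Prop) x y := exists c, S c /\
  (x = c \/ (x, c) \in E) /\ (y = c \/ (y, c) \in E).

Inductive MP (S : T -> Prop) : T -> Prop :=
| MP0 : MP S a
| MPS x y : MP S x -> (x = a \/ x \notin Z) -> madj S x y -> MP S y.

Lemma MP_mono S S' : (forall v, S v -> S' v) -> forall y, MP S y -> MP S' y.
Proof.
move=> SS' y; elim=> [|x z _ IH cx [c [Sc [hx hy]]]]; first exact: MP0.
by apply: MPS IH cx _; exists c; split; [apply: SS'|].
Qed.

Let S0 := ancS (fun w => w = a \/ w \in Z).
Let Sv v := ancS (fun w => w = a \/ w = v \/ w \in Z).

Lemma S0_Sv v x : S0 x -> Sv v x.
Proof. by case=> w [hw c]; exists w; split=> //; case: hw => [->|?]; [left|right;right]. Qed.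

Lemma Sv_conn u v x : connect (edge_rel E) u v -> Sv u x -> Sv v x.
Proof.
move=> cuv [w [[->|[->|wZ]] c]].
- by exists a; split=> //; left.
- by exists v; split; [right;left|apply: connect_trans cuv].
- by exists w; split=> //; right;right.
Qed.

Lemma Sv_S0 u x : S0 u -> Sv u x -> S0 x.
Proof.
move=> [w0 [hw0 c0]] [w [[->|[->|wZ]] c]].
- by exists a; split=> //; left.
- by exists w0; split=> //; apply: connect_trans c0.
- by exists w; split=> //; right.
Qed.

Lemma Sv_refl v : Sv v v.
Proof. by exists v; split; [right;left|apply: connect0]. Qed.

Lemma AZ_S0 u : AZ E Z u -> S0 u.
Proof. by case/existsP=> w /andP[wZ c]; exists w; split=> //; right. Qed.

Lemma reach_MP v h : Reach E Z a v h ->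
  if h then exists p, (p, v) \in E /\ (p = a \/ p \notin Z) /\ MP (Sv v) p
  else S0 v /\ MP S0 v.
Proof.
elim=> [w [] st|u h' w [] _ IH st cd].
- by exists a; split=> //; split; [left|apply: MP0].
- split; first by exists a; split; [left|apply: connect1].
  apply: MPS (MP0 _) (or_introl erefl) _.
  by exists a; split; [exists a; split; [left|apply: connect0]|split; [left|right]].
- rewrite /cnd /= andbF in cd.
  exists u; split=> //; split; first by right.
  case: h' IH {cd} => [[p [pu [cp Hp]]]|[S0u Hu]].
    apply: MPS (MP_mono _ Hp) cp _; first by move=> x; apply: Sv_conn; apply: connect1.
    by exists u; split; [exists w; split; [right; left|exact: connect1]|split; [right|left]].
  by apply: MP_mono Hu => x; apply: S0_Sv.
- rewrite /cnd /= andbT in cd.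
  case: h' IH cd => [[p [pu [cp Hp]]] cd|[S0u Hu] cd].
    have S0u := AZ_S0 cd.
    split; first by case: S0u => x [hx cx]; exists x; split=> //; apply: connect_trans cx; apply: connect1.
    apply: MPS (MP_mono (fun x => @Sv_S0 u x S0u) Hp) cp _.
    by exists u; split=> //; split; right.
  split; first by case: S0u => x [hx cx]; exists x; split=> //; apply: connect_trans cx; apply: connect1.
  apply: MPS Hu (or_intror cd) _.
  by exists u; split=> //; split; [left|right].
Qed.

Lemma moral_of_reach b h : Reach E Z a b h -> MP (Sv b) b.
Proof.
move/reach_MP; case: h => [[p [pb [cp Hp]]]|[_ H]]; last by apply: MP_mono H => x; apply: S0_Sv.
by apply: MPS Hp cp _; exists b; split; [apply: Sv_refl|split; [right|left]].
Qed.

Variable b : T.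

Definition good x := x = a \/ (x \notin Z /\ (Reach E Z a x false \/ (Reach E Z a x true /\ AZ E Z x))).

Lemma good_child x c : good x -> (x, c) \in E -> Reach E Z a c true.
Proof.
case=> [->|[xZ [R|[R _]]]] xc; first by apply: R0.
- by apply: RS R _ _; rewrite /cnd /=.
- by apply: RS R _ _; rewrite /cnd /=.
Qed.

Lemma good_parent x q : good x -> (q, x) \in E -> Reach E Z a q false.
Proof.
case=> [->|[xZ [R|[R az]]]] qx; first by apply: R0.
- by apply: RS R _ _; rewrite /cnd /=.
- by apply: RS R _ _; rewrite /cnd /=.
Qed.

Lemma notAZ_Z y : ~~ AZ E Z y -> y \notin Z.
Proof.
apply: contra => yZ; apply/existsP; exists y; rewrite yZ; apply: connect0.
Qed.

Lemma AZ_conn y z : connect (edge_rel E) y z -> AZ E Z z -> AZ E Z y.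
Proof.
move=> cyz /existsP[w /andP[wZ c]]; apply/existsP; exists w.
by rewrite wZ (connect_trans cyz c).
Qed.

Lemma follow_down y w : Reach E Z a y true -> ~~ AZ E Z y ->
  connect (edge_rel E) y w -> y = w \/ Reach E Z a w true.
Proof.
move=> Ry ny /connectP[p pp ->]; elim: p y Ry ny pp => [|z p IH] y Ry ny /=.
  by left.
case/andP=> yz pz; right.
have Rz : Reach E Z a z true by apply: RSc Ry yz _; rewrite /cnd /= notAZ_Z.
have nz : ~~ AZ E Z z.
  by apply: contra ny; apply: AZ_conn; apply: connect1.
by case: (IH z Rz nz pz) => [<-|].
Qed.

Lemma follow_up y : ~~ AZ E Z y -> connect (edge_rel E) y a ->
  y = a \/ Reach E Z a y false.
Proof.
move=> ny /connectP[p pp ea]; elim: p y ny pp ea => [|z p IH] y ny /=.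
  by move=> _ ->; left.
case/andP=> yz pz ea; right.
have nz : ~~ AZ E Z z by apply: contra ny; apply: AZ_conn; apply: connect1.
case: (IH z nz pz ea) => [eza|Rz].
  by apply: R0p; rewrite -eza.
by apply: RSp Rz yz _; rewrite /cnd /= ?notAZ_Z.
Qed.

Lemma route y : Sv b y -> ~~ AZ E Z y -> Reach E Z a y true ->
  (exists d, Reach E Z a b d) \/ y = a \/ Reach E Z a y false.
Proof.
move=> [w [[->|[->|wZ]] cyw]] ny Ry.
- by right; apply: follow_up.
- by left; exists true; case: (follow_down Ry ny cyw) => [<-|].
- by case/negP: ny; apply/existsP; exists w; rewrite wZ cyw.
Qed.

Definition Rp y := (exists d, Reach E Z a b d) \/ y = a \/ Reach E Z a y false \/
  (Reach E Z a y true /\ AZ E Z y).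

Lemma claim x y : good x -> madj (Sv b) x y -> Rp y.
Proof.
move=> gx [c [Sc [[<-|xc] [yc|yc]]]].
- rewrite yc; case: gx => [->|[_ [R|R]]]; rewrite /Rp; tauto.
- by right; right; left; apply: good_parent gx yc.
- have Rc := good_child gx xc; rewrite yc.
  case Ac: (AZ E Z c); first by right; right; right.
  by case: (route Sc (negbT Ac) Rc) => [|[]]; rewrite /Rp; tauto.
- have Rc := good_child gx xc.
  case Ac: (AZ E Z c).
    by right; right; left; apply: RSp Rc yc _; rewrite /cnd /=.
  case: (route Sc (negbT Ac) Rc) => [H|[ca|Rc']]; first by left.
    by right; right; left; apply: R0; rewrite /step -ca.
  by right; right; left; apply: RSp Rc' yc _; rewrite /cnd /= notAZ_Z ?Ac.
Qed.

Lemma MP_Rp y : MP (Sv b) y -> Rp y.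
Proof.
elim=> [|x z _ IH cx Hm]; first by right; left.
case: IH => [H|[xa|[R|[R az]]]]; first by left.
- by apply: claim Hm; left.
- by apply: claim Hm; case: cx => [->|xZ]; [left|right]=> //; split=> //; left.
- by apply: claim Hm; case: cx => [->|xZ]; [left|right]=> //; split=> //; right.
Qed.

Lemma MP_reach : a != b -> MP (Sv b) b -> exists d, Reach E Z a b d.
Proof.
move=> nab /MP_Rp [H|[ba|[R|[R _]]]] //; last by exists true.
  by rewrite ba eqxx in nab.
by exists false.
Qed.

End Moral.


Section Equiv.
Variable T : finType.

Definition ancestral (E : {set T * T}) (S : T -> Prop) :=
  forall x y, connect (edge_rel E) x y -> S y -> S x.

Lemma MP_transfer (E1 E2 : {set T * T}) Z a S y :
  (forall x y, madj E1 S x y -> madj E2 S x y) -> MP E1 Z a S y -> MP E2 Z a S y.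
Proof.
move=> H; elim=> [|x z _ IH cx Hm]; first exact: MP0.
exact: MPS IH cx (H _ _ Hm).
Qed.

Lemma ancS_anc (E : {set T * T}) P : ancestral E (ancS E P).
Proof. by move=> x y cxy [w [Pw cyw]]; exists w; split=> //; apply: connect_trans cyw. Qed.

Arguments ancS_anc : clear implicits.

Lemma equiv_half (E1 E2 : {set T * T}) Z a b :
  a != b ->
  (forall x y, connect (edge_rel E1) x y = connect (edge_rel E2) x y) ->
  (forall S, ancestral E1 S -> forall x y, madj E1 S x y -> madj E2 S x y) ->
  (exists s, active_path E1 Z a b s) -> (exists s, active_path E2 Z a b s).
Proof.
move=> nab Hc Hm /(dconn_reach _ _ nab) [d R].
apply/(dconn_reach _ _ nab); apply: MP_reach => //.
have := moral_of_reach R => H1.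
have H2 := MP_transfer (Hm _ (ancS_anc E1 _)) H1.
apply: MP_mono H2 => x [w [Pw cw]]; exists w; split=> //; by rewrite -Hc.
Qed.

Lemma equiv_of (E1 E2 : {set T * T}) :
  (forall x y, connect (edge_rel E1) x y = connect (edge_rel E2) x y) ->
  (forall S, ancestral E1 S -> forall x y, madj E1 S x y -> madj E2 S x y) ->
  (forall S, ancestral E1 S -> forall x y, madj E2 S x y -> madj E1 S x y) ->
  markov_equivalent E1 E2.
Proof.
move=> Hc Hm1 Hm2 a b Z nab; rewrite /d_separated; split=> H1 H2; apply: H1.
- apply: (equiv_half nab) H2 => //.
  by move=> S SA; apply: Hm2 => x y cxy; apply: SA; rewrite -Hc.
- exact: (equiv_half nab) H2.
Qed.

End Equiv.


Definition Tc (T : finType) (c : seq T) (F : {set T * T}) : {set T * T} :=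
  [set e : T * T | if e.2 \in c then (e.1 == next c e.2) || ((e.1 != e.2) && ((e.1, next c e.2) \in F))
                   else e \in F].

Section TC.
Variables (T : finType) (F : {set T * T}) (c : seq T).
Hypotheses (HF : is_DCG F) (Hu : uniq c) (Hc : cycle (edge_rel F) c).

Lemma Tc_in x y : ((x, y) \in Tc c F) =
  (if y \in c then (x == next c y) || ((x != y) && ((x, next c y) \in F)) else (x, y) \in F).
Proof. by rewrite inE. Qed.

Lemma enext x : x \in c -> (x, next c x) \in F.
Proof. by move=> xc; have := next_cycle Hc xc. Qed.

Lemma next_neq x : x \in c -> next c x != x.
Proof. by move=> xc; apply/eqP => h; have := enext xc; rewrite h (negbTE (HF x)). Qed.

Lemma connF x y : x \in c -> y \in c -> connect (edge_rel F) x y.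
Proof. by move=> xc yc; apply: (connect_cycle Hc). Qed.

Lemma cycTc : cycle (edge_rel (Tc c F)) (rev c).
Proof.
rewrite rev_cycle; apply: (@sub_in_cycle _ (mem c) (frel (next c))); last exact: cycle_next.
  move=> z w zc wc /= /eqP <-; rewrite /edge_rel /= Tc_in zc eqxx //.
by apply/allP.
Qed.

Lemma connT x y : x \in c -> y \in c -> connect (edge_rel (Tc c F)) x y.
Proof. by move=> xc yc; apply: (connect_cycle cycTc); rewrite mem_rev. Qed.

Lemma Tc_DCG : is_DCG (Tc c F).
Proof.
move=> x; rewrite Tc_in; case: ifP => xc; last exact: HF.
by rewrite eq_sym (negbTE (next_neq xc)) eqxx.
Qed.

Lemma Tc_conn x y : connect (edge_rel F) x y = connect (edge_rel (Tc c F)) x y.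
Proof.
apply/idP/idP; apply: connect_sub => u v; rewrite /edge_rel /= => uv.
- case vc: (v \in c); last by apply: connect1; rewrite /edge_rel /= Tc_in vc.
  have pc : prev c v \in c by rewrite mem_prev.
  case: (eqVneq u (prev c v)) => [->|ne]; first exact: connT.
  apply: (@connect_trans _ _ (prev c v)); last exact: connT.
  by apply: connect1; rewrite /edge_rel /= Tc_in pc ne next_prev // uv orbT.
- move: uv; rewrite Tc_in; case vc: (v \in c); last by move=> uv; apply: connect1.
  case/orP=> [/eqP ->|/andP[_ uv]]; first by apply: connF; rewrite ?mem_next.
  apply: (@connect_trans _ _ (next c v)); first exact: connect1.
  by apply: connF; rewrite ?mem_next.
Qed.

Lemma madj_FT S x y : ancestral F S -> madj F S x y -> madj (Tc c F) S x y.
Proof.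
move=> SA [c0 [Sc0 [hx hy]]]; case c0c: (c0 \in c).
  have pc : prev c c0 \in c by rewrite mem_prev.
  have fam z : z = c0 \/ (z, c0) \in F -> z = prev c c0 \/ (z, prev c c0) \in Tc c F.
    case=> [->|zc0]; first by right; rewrite Tc_in pc next_prev // eqxx.
    case: (eqVneq z (prev c c0)) => [->|ne]; first by left.
    by right; rewrite Tc_in pc ne next_prev // zc0 orbT.
  exists (prev c c0); split; last by split; apply: fam.
  by apply: SA Sc0; apply: connF.
exists c0; split=> //; split.
  by case: hx => [->|h]; [left|right; rewrite Tc_in c0c].
by case: hy => [->|h]; [left|right; rewrite Tc_in c0c].
Qed.

Lemma madj_TF S x y : ancestral F S -> madj (Tc c F) S x y -> madj F S x y.
Proof.
move=> SA [c0 [Sc0 [hx hy]]]; case c0c: (c0 \in c).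
  have nc : next c c0 \in c by rewrite mem_next.
  have fam z : z = c0 \/ (z, c0) \in Tc c F -> z = next c c0 \/ (z, next c c0) \in F.
    case=> [->|]; first by right; apply: enext.
    rewrite Tc_in c0c => /orP[/eqP ->|/andP[_ h]]; [by left|by right].
  exists (next c c0); split; last by split; apply: fam.
  by apply: SA Sc0; apply: connF.
exists c0; split=> //; split.
  by case: hx => [->|h]; [left|right; rewrite Tc_in c0c in h].
by case: hy => [->|h]; [left|right; rewrite Tc_in c0c in h].
Qed.

Lemma Tc_equiv : markov_equivalent F (Tc c F).
Proof.
apply: equiv_of; first exact: Tc_conn.
- by move=> S SA x y; apply: madj_FT.
- by move=> S SA x y; apply: madj_TF.
Qed.

Variable v0 : T.
Hypotheses (v0c : v0 \in c) (Hfix : Tc c F = F) (Hnn : next c (next c v0) != v0).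

Definition Rm := F :\ (v0, next c v0).

Lemma rev_edge z : z \in c -> (next c z, z) \in F.
Proof. by move=> zc; rewrite -Hfix Tc_in zc eqxx. Qed.

Lemma par_edge p : (p, next c v0) \in F -> p != v0 -> (p, v0) \in F.
Proof. by move=> h ne; rewrite -Hfix Tc_in v0c ne h orbT. Qed.

Lemma Rm_in x y : ((x, y) \in Rm) = ((x, y) != (v0, next c v0)) && ((x, y) \in F).
Proof. by rewrite !inE. Qed.

Lemma Rm_DCG : is_DCG Rm.
Proof. by move=> x; rewrite Rm_in (negbTE (HF x)) andbF. Qed.

Lemma cycRm : cycle (edge_rel Rm) (rev c).
Proof.
rewrite rev_cycle; apply: (@sub_in_cycle _ (mem c) (frel (next c))); last exact: cycle_next.
  move=> z w zc wc /= /eqP <-; rewrite /edge_rel /= Rm_in rev_edge // andbT.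
  apply/eqP; case=> e1 e2; move: Hnn; by rewrite -e2 e1 eqxx.
by apply/allP.
Qed.

Lemma Rm_conn x y : connect (edge_rel F) x y = connect (edge_rel Rm) x y.
Proof.
apply/idP/idP; apply: connect_sub => u v; rewrite /edge_rel /= => uv.
- case: (eqVneq (u, v) (v0, next c v0)) => [[-> ->]|ne].
    by apply: (connect_cycle cycRm); rewrite mem_rev ?mem_next.
  by apply: connect1; rewrite /edge_rel /= Rm_in ne.
- by apply: connect1; move: uv; rewrite Rm_in => /andP[].
Qed.

Lemma madj_FR S x y : ancestral F S -> madj F S x y -> madj Rm S x y.
Proof.
move=> SA [c0 [Sc0 [hx hy]]]; case: (eqVneq c0 (next c v0)) => [e|ne].
  have nv : v0 != next c v0 by rewrite eq_sym next_neq.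
  have fam z : z = c0 \/ (z, c0) \in F -> z = v0 \/ (z, v0) \in Rm.
    rewrite e; case=> [->|zc0].
      right; rewrite Rm_in rev_edge // andbT.
      by apply/eqP; case=> h _; move: nv; rewrite h eqxx.
    case: (eqVneq z v0) => [->|zv]; first by left.
    right; rewrite Rm_in par_edge // andbT.
    by apply/eqP; case=> h _; move: zv; rewrite h eqxx.
  exists v0; split; last by split; apply: fam.
  by apply: SA Sc0; rewrite e; apply: connect1; apply: enext.
have fam z : z = c0 \/ (z, c0) \in F -> z = c0 \/ (z, c0) \in Rm.
  case=> [->|h]; first by left.
  by right; rewrite Rm_in h andbT; apply/eqP; case=> _ h'; move: ne; rewrite h' eqxx.
by exists c0; split=> //; split; apply: fam.
Qed.

Lemma madj_RF S x y : madj Rm S x y -> madj F S x y.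
Proof.
move=> [c0 [Sc0 [hx hy]]]; exists c0; split=> //; split.
  by case: hx => [->|]; [left|rewrite Rm_in => /andP[_ h]; right].
by case: hy => [->|]; [left|rewrite Rm_in => /andP[_ h]; right].
Qed.

Lemma Rm_equiv : markov_equivalent F Rm.
Proof.
apply: equiv_of; first exact: Rm_conn.
- by move=> S SA x y; apply: madj_FR.
- by move=> S SA x y; apply: madj_RF.
Qed.

End TC.


Section Comb.
Variable T : finType.

Definition M (c : seq T) (F : {set T * T}) : {set T * T} :=
  if c is v0 :: _ then (if Tc c F == F then Rm F c v0 else Tc c F) else F.

Lemma nn (v0 v1 v2 : T) r : uniq [:: v0, v1, v2 & r] ->
  next [:: v0, v1, v2 & r] (next [:: v0, v1, v2 & r] v0) != v0.
Proof.
rewrite /= !inE => /andP[/norP[n01 /norP[n02 _]] /andP[/norP [n12 _] _]].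
by rewrite /next /= eqxx /= (eq_sym v1 v0) (negbTE n01) eqxx eq_sym.
Qed.

Lemma meq_trans (E1 E2 E3 : {set T * T}) :
  markov_equivalent E1 E2 -> markov_equivalent E2 E3 -> markov_equivalent E1 E3.
Proof.
move=> H1 H2 a b Z nab; split=> H.
- by apply: (H2 a b Z nab).1; apply: (H1 a b Z nab).1.
- by apply: (H1 a b Z nab).2; apply: (H2 a b Z nab).2.
Qed.

Lemma meq_refl (E1 : {set T * T}) : markov_equivalent E1 E1.
Proof. by []. Qed.

Lemma M_equiv (c : seq T) (F : {set T * T}) : is_DCG F -> uniq c -> cycle (edge_rel F) c -> 3 <= size c ->
  is_DCG (M c F) /\ markov_equivalent F (M c F).
Proof.
case: c => [|v0 [|v1 [|v2 r]]] // HF Hu Hc _; rewrite /M.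
case: ifP => /eqP H.
  split; first exact: Rm_DCG.
  by apply: Rm_equiv => //; [rewrite inE eqxx|apply: nn].
by split; [apply: Tc_DCG|apply: Tc_equiv].
Qed.

Lemma M_out (c : seq T) (F : {set T * T}) x y : uniq c -> y \notin c -> ((x, y) \in M c F) = ((x, y) \in F).
Proof.
case: c => [|v0 r] // Hu yc; rewrite /M; case: ifP => _.
  rewrite Rm_in; case: (eqVneq (x, y) (v0, next (v0 :: r) v0)) => [[_ e]|_] //.
  by have := mem_next (v0 :: r) v0; rewrite /= -e (negbTE yc) inE eqxx.
by rewrite Tc_in (negbTE yc).
Qed.

Lemma fixE (c : seq T) (F : {set T * T}) : (Tc c F == F) =
  [forall x : T, forall y : T, (y \in c) ==> (((x, y) \in Tc c F) == ((x, y) \in F))].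
Proof.
apply/eqP/forallP => [-> x|H]; first by apply/forallP => y; rewrite eqxx implybT.
apply/setP => [[x y]]; case yc: (y \in c).
  by have /forallP/(_ y) := H x; rewrite yc => /eqP.
by rewrite Tc_in yc.
Qed.

Lemma Tc_agree (c : seq T) (F1 F2 : {set T * T}) : (forall x y, y \in c -> ((x, y) \in F1) = ((x, y) \in F2)) ->
  forall x y, y \in c -> ((x, y) \in Tc c F1) = ((x, y) \in Tc c F2).
Proof.
by move=> H x y yc; rewrite !Tc_in yc H // mem_next.
Qed.

Lemma M_agree (c : seq T) (F1 F2 : {set T * T}) : (forall x y, y \in c -> ((x, y) \in F1) = ((x, y) \in F2)) ->
  forall x y, y \in c -> ((x, y) \in M c F1) = ((x, y) \in M c F2).
Proof.
case: c => [|v0 r] // H x y yc; rewrite /M.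
have -> : (Tc (v0 :: r) F1 == F1) = (Tc (v0 :: r) F2 == F2).
  rewrite !fixE; apply: eq_forallb => u; apply: eq_forallb => w.
  case wc: (w \in v0 :: r) => //=.
  by rewrite (Tc_agree H) // H.
case: ifP => _; last exact: Tc_agree.
by rewrite !Rm_in H.
Qed.

Lemma M_diff (c : seq T) (F : {set T * T}) : is_DCG F -> uniq c -> cycle (edge_rel F) c -> 3 <= size c ->
  exists x y, y \in c /\ ((x, y) \in M c F) != ((x, y) \in F).
Proof.
case: c => [|v0 r] // HF Hu Hc _; rewrite /M; case: ifP => H.
  exists v0, (next (v0 :: r) v0); split; first by rewrite mem_next inE eqxx.
  by rewrite Rm_in eqxx enext // inE eqxx.
move: H; rewrite fixE => /negbT; rewrite negb_forall => /existsP[x].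
rewrite negb_forall => /existsP[y]; rewrite negb_imply => /andP[yc ne].
by exists x, y.
Qed.

Definition G (l : seq (seq T)) (E : {set T * T}) := foldr M E l.

Definition pdis (l : seq (seq T)) := pairwise (fun c1 c2 => [disjoint c1 & c2]) l.

Lemma G_out (l : seq (seq T)) (E : {set T * T}) x y : all uniq l -> (forall c, c \in l -> y \notin c) ->
  ((x, y) \in G l E) = ((x, y) \in E).
Proof.
elim: l => [|c l IH] //= /andP[uc ul] H.
rewrite M_out ?H ?inE ?eqxx //; apply: IH => // c' c'l; apply: H; by rewrite inE c'l orbT.
Qed.

Lemma disj_notin (c1 c2 : seq T) y : [disjoint c1 & c2] -> y \in c1 -> y \notin c2.
Proof. by move=> H yc; rewrite (disjointFr H yc). Qed.

Lemma G_in (l : seq (seq T)) (E : {set T * T}) (c : seq T) x y : all uniq l -> pdis l -> c \in l -> y \in c ->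
  ((x, y) \in G l E) = ((x, y) \in M c E).
Proof.
elim: l => [|c' l IH] //= /andP[uc ul] /andP[hd pl] cl yc.
case: (eqVneq c' c) => [e|ne].
  subst c'; apply: M_agree => // u w wc; apply: G_out => // c'' c''l.
  by apply: (disj_notin (c1 := c)) wc; move/allP: hd; apply.
have cl' : c \in l by move: cl; rewrite inE eq_sym (negbTE ne).
rewrite M_out //; first exact: IH.
have /allP/(_ c cl') := hd => dis.
by apply/negP => yc'; move: (disj_notin dis yc'); rewrite yc.
Qed.

Lemma G_equiv (l : seq (seq T)) (E : {set T * T}) : is_DCG E -> all uniq l -> pdis l ->
  (forall c, c \in l -> cycle (edge_rel E) c /\ 3 <= size c) ->
  is_DCG (G l E) /\ markov_equivalent E (G l E).
Proof.
move=> HE; elim: l => [|c l IH] /=; first by split.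
case/andP=> uc ul /andP[hd pl] Hc.
have Hl : forall c', c' \in l -> cycle (edge_rel E) c' /\ 3 <= size c' by move=> c' h; apply: Hc; rewrite inE h orbT.
have [D1 Q1] := IH ul pl Hl.
have [cyc sz] := Hc c (mem_head _ _).
have cyc' : cycle (edge_rel (G l E)) c.
  have EQ : cycle (edge_rel E) c = cycle (edge_rel (G l E)) c.
    apply: (@eq_in_cycle _ (mem c)); last by apply/allP.
    move=> u w uc' wc /=; rewrite /edge_rel /= G_out // => c'' c''l.
    by apply: (disj_notin (c1 := c)) wc; move/allP: hd; apply.
  by rewrite -EQ.
have [D2 Q2] := M_equiv D1 uc cyc' sz.
by split=> //; apply: meq_trans Q2.
Qed.

End Comb.


Theorem mainTheorem13 (T : finType) (E : {set T * T}) (k : nat)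
    (cs : 'I_k -> seq T) :
  is_DCG E ->
  (forall i : 'I_k, is_cycle E (cs i) /\ 3 <= size (cs i)) ->
  (forall i j : 'I_k, i != j -> [disjoint cs i & cs j]) ->
  2 ^ k <= #|MEC E|.
Proof.
move=> HE Hcyc Hdis.
pose l (S : {set 'I_k}) := map cs (enum S).
pose f (S : {set 'I_k}) := G (l S) E.
have Hu S : all uniq (l S).
  by apply/allP => c /mapP[i _ ->]; have [[_ [u _]] _] := Hcyc i.
have Hp S : pdis (l S).
  rewrite /pdis pairwise_map; apply: (@sub_pairwise _ (fun x y => x != y)).
    by move=> i j /= ne; apply: Hdis.
  by rewrite -uniq_pairwise enum_uniq.
have Hc S c : c \in l S -> cycle (edge_rel E) c /\ 3 <= size c.
  by case/mapP=> i _ ->; have [[_ [_ cy]] sz] := Hcyc i.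
have HM S : f S \in MEC E.
  have [D Q] := G_equiv HE (Hu S) (Hp S) (Hc S).
  by rewrite inE; apply/asboolP.
have key (S1 S2 : {set 'I_k}) (i : 'I_k) : i \in S1 -> i \notin S2 -> f S1 <> f S2.
  move=> i1 i2 e.
  have [[_ [ui cyi]] szi] := Hcyc i.
  have [x [y [yc ne]]] := M_diff HE ui cyi szi.
  have h1 : ((x, y) \in f S1) = ((x, y) \in M (cs i) E).
    by apply: G_in => //; apply: map_f; rewrite mem_enum.
  have h2 : ((x, y) \in f S2) = ((x, y) \in E).
    apply: G_out => // c /mapP[j jS ->].
    have ij : i != j by apply/eqP => ij; move: i2; rewrite ij -mem_enum jS.
    exact: disj_notin (Hdis _ _ ij) yc.
  by move: ne; rewrite -h1 -h2 e eqxx.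
have finj : injective f.
  move=> S1 S2 e; apply/setP => i.
  case: (boolP (i \in S1)) => h1; case: (boolP (i \in S2)) => h2 //.
  - by case: (key _ _ _ h1 h2 e).
  - by case: (key _ _ _ h2 h1 (esym e)).
have -> : 2 ^ k = #|f @: powerset [set: 'I_k]|.
  by rewrite card_imset // card_powerset cardsT card_ord.
apply: subset_leq_card; apply/subsetP => _ /imsetP[S _ ->]; exact: HM.
Qed.
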